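(* Let $\mathcal L_1$ and $\mathcal L_2$ be countable sets of finite linear orders. Then $\mathcal L_1=\mathcal L_2$ (as sets of isomorphism types) if and only if $\mathrm{Shuf}(\mathcal L_1)\cong\mathrm{Shuf}(\mathcal L_2)$. Moreover, no interval of $\mathrm{Shuf}(\mathcal L_1)$ is isomorphic to $\omega$.
   Context: For a countable set $I$, a dense $I$-coloring of $\mathbb Q$ is a map $c:\mathbb Q\to I$ such that for all $x<y$ in $\mathbb Q$ and all $i\in I$ there is $z$ with $x<z<y$ and $c(z)=i$. For a set of linear orders $\mathcal L=\{L_i\mid i\in I\}$ with $I$ countable, $\mathrm{Shuf}(\mathcal L)=\sum_{x\in\mathbb Q}L_{c(x)}$ for a dense $I$-coloring $c$ (this is independent of $c$ up to isomorphism), where $\sum_{x\in\mathbb Q}$ is the ordered sum (lexicographic on pairs: first by $x$, then within $L_{c(x)}$). ''$\mathcal L_1=\mathcal L_2$'' means every member of each is isomorphic to some member of the other. An interval of a linear order is a subset $I$ with $x,y\in I$, $x<z<y$ implying $z\in I$; $\omega$ is the order type of $(\mathbb N;\le)$. *)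

(* Defs.v *)
(* Q is mathcomp's [rat], countable index sets are countTypes. *)
From mathcomp Require Import all_boot all_order all_algebra.
From Stdlib Require Lists.List.
Set Implicit Arguments. Unset Strict Implicit. Unset Printing Implicit Defensive.
Import Order.TTheory GRing.Theory Num.Theory.

Record LinOrder := {
  lcar :> Type;
  lo : lcar -> lcar -> Prop;
  lo_refl : forall x, lo x x;
  lo_antisym : forall x y, lo x y -> lo y x -> x = y;
  lo_trans : forall x y z, lo x y -> lo y z -> lo x z;
  lo_total : forall x y, lo x y \/ lo y x }.

Definition finite_type (A : Type) : Prop := exists s : list A, forall x, Stdlib.Lists.List.In x s.
Definition finite_LO (L : LinOrder) : Prop := finite_type L /\ inhabited (lcar L).

Definition iso_rel (A B : Type) (RA : A -> A -> Prop) (RB : B -> B -> Prop) : Prop :=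
  exists (f : A -> B) (g : B -> A),
    cancel f g /\ cancel g f /\ forall x y, RA x y <-> RB (f x) (f y).

Definition iso_LO (L M : LinOrder) : Prop := iso_rel (@lo L) (@lo M).

Definition same_types (I J : Type) (L1 : I -> LinOrder) (L2 : J -> LinOrder) : Prop :=
  (forall i, exists j, iso_LO (L1 i) (L2 j)) /\
  (forall j, exists i, iso_LO (L1 i) (L2 j)).

Definition dense_coloring (I : Type) (c : rat -> I) : Prop :=
  forall (x y : rat) (i : I), (x < y)%R -> exists z : rat, (x < z)%R /\ (z < y)%R /\ c z = i.

(* The ordered sum  sum_{x in Q} L_{c(x)}  (lexicographic). *)
Definition qsum_car (I : Type) (L : I -> LinOrder) (c : rat -> I) : Type :=
  {x : rat & lcar (L (c x))}.

Definition qsum_le (I : Type) (L : I -> LinOrder) (c : rat -> I)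
  (p q : qsum_car L c) : Prop :=
  (projT1 p < projT1 q)%R \/
  exists e : projT1 p = projT1 q,
    lo (eq_rect (projT1 p) (fun x => lcar (L (c x))) (projT2 p) (projT1 q) e) (projT2 q).

Definition is_interval (A : Type) (R : A -> A -> Prop) (P : A -> Prop) : Prop :=
  forall x y z, P x -> P y -> R x z -> R z y -> P z.

Definition restr (A : Type) (R : A -> A -> Prop) (P : A -> Prop) :
  {a : A | P a} -> {a : A | P a} -> Prop := fun u v => R (proj1_sig u) (proj1_sig v).

Definition omega_le : nat -> nat -> Prop := fun m n => (m <= n)%N.

(* Main.v *)
Require Import Defs.
From mathcomp Require Import all_boot all_order all_algebra.
From mathcomp Require Import zify lra.
From Stdlib Require Import ClassicalEpsilon Classical ProofIrrelevance Eqdep_dec.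
Import Order.TTheory GRing.Theory Num.Theory.
Set Implicit Arguments. Unset Strict Implicit.

Lemma pigeon (A : Type) (l : list A) : forall (h : nat -> A),
  injective h -> (forall n, List.In (h n) l) -> False.
Proof.
elim: l => [|a l IH] h hi hin; first by case: (hin 0).
case: (classic (exists n0, h n0 = a)) => [[n0 hn0]|nh].
- pose h' n := h (if n < n0 then n else n.+1).
  apply: (IH h').
  + move=> m n; rewrite /h' => /hi.
    case: (ltnP m n0); case: (ltnP n n0) => ? ? ?; lia.
  + move=> n; case: (hin (if n < n0 then n else n.+1)) => //= e.
    have := hi _ _ (etrans hn0 e); case: ltnP => ? ?; lia.
- apply: (IH h hi) => n; case: (hin n) => //= e; case: nh; by exists n.
Qed.

Section QS.
Variables (I : Type) (L : I -> LinOrder) (c : rat -> I).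
Hypothesis fin : forall i, finite_LO (L i).
Notation car := (qsum_car L c).
Notation le := (@qsum_le I L c).
Notation mk x a := (existT (fun z : rat => lcar (L (c z))) x a).

Lemma le_fst (p q : car) : le p q -> (projT1 p <= projT1 q)%R.
Proof. case=> [/ltW //| [e _]]; by rewrite e. Qed.

Lemma le_refl (p : car) : le p p.
Proof. right; exists erefl; apply: lo_refl. Qed.

Lemma qle_same x (a b : L (c x)) : le (mk x a) (mk x b) <-> lo a b.
Proof.
split; last by move=> H; right; exists erefl.
case => /=; first by rewrite ltxx.
by case=> e; rewrite (eq_irrelevance e erefl).
Qed.

Lemma qle_diff x y (a : L (c x)) (b : L (c y)) : x <> y -> le (mk x a) (mk y b) <-> (x < y)%R.
Proof. move=> ne; split; [case=> // [[e _]] // | by left]. Qed.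

Lemma block_inj x (s : nat -> car) : injective s -> (forall n, projT1 (s n) = x) -> False.
Proof.
move=> si hs.
case: (fin (c x)) => [[l Hl] _].
apply: (pigeon (l := List.map (fun a => mk x a) l) si) => n.
move: (hs n); case: (s n) => y b /= e; subst y.
by apply: List.in_map.
Qed.

Definition NB (p q : car) := ~ exists s : nat -> car, injective s /\ forall n, le p (s n) /\ le (s n) q.

Lemma NB_same p q : projT1 p = projT1 q -> NB p q.
Proof.
move=> e [s [si H]]; apply: (block_inj (x:=projT1 p) si) => n.
case: (H n) => /le_fst h1 /le_fst h2.
by apply: le_anti; rewrite h1 andbT -e in h2 *; rewrite h2.
Qed.

Definition pt z : lcar (L (c z)) := epsilon (proj2 (fin (c z))) (fun _ => True).

Lemma rat_aux (x y : rat) k : (x < y)%R ->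
  (x < x + (y - x) / (k.+2)%:R)%R /\ (x + (y - x) / (k.+2)%:R < y)%R.
Proof.
move=> xy; have d0 : (0 < y - x)%R by rewrite subr_gt0.
have k0 : (0 < (k.+2)%:R :> rat)%R by rewrite ltr0n.
split; first by rewrite ltrDl divr_gt0.
rewrite -ltrBrDl ltr_pdivrMr // ltr_pMr // ltr1n //.
Qed.

Lemma NB_lt p q : (projT1 p < projT1 q)%R -> ~ NB p q.
Proof.
move=> lt; apply.
set x := projT1 p; set y := projT1 q.
pose z k := (x + (y - x) / (k.+2)%:R)%R.
exists (fun k => mk (z k) (pt (z k))); split.
- move=> m n /(f_equal (@projT1 _ _)) /=; rewrite /z => /addrI.
  have d0 : (y - x != 0)%R by rewrite subr_eq0 gt_eqF.
  move/(mulfI d0)/invr_inj/eqP; rewrite eqr_nat; by move/eqP => [].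
- move=> n; have [h1 h2] := rat_aux n lt.
  by split; left.
Qed.

Lemma NB_eq p q : NB p q -> NB q p -> projT1 p = projT1 q.
Proof.
move=> n1 n2; case: (ltgtP (projT1 p) (projT1 q)) => // h.
- by case: (NB_lt h).
- by case: (NB_lt h).
Qed.

Definition cast (q : car) y (e : projT1 q = y) : lcar (L (c y)) :=
  eq_rect (projT1 q) (fun x => lcar (L (c x))) (projT2 q) y e.

Lemma castK q y e : mk y (@cast q y e) = q.
Proof. by case: q e => x a /= e; subst. Qed.

Lemma cast_eq q y (e : projT1 q = y) a : q = mk y a -> cast e = a.
Proof. move=> E; subst q; by rewrite /cast /= (eq_irrelevance e erefl). Qed.

End QS.

Section QS2.
Variables (I : Type) (L : I -> LinOrder) (c : rat -> I).
Hypothesis fin : forall i, finite_LO (L i).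
Notation car := (qsum_car L c).
Notation le := (@qsum_le I L c).

Lemma no_omega (P : car -> Prop) : is_interval le P -> ~ iso_rel (@restr _ le P) omega_le.
Proof.
move=> HP [f [g [fK [gK Hf]]]].
pose s n := proj1_sig (g n).
have si : injective s.
  move=> m n e; apply: (can_inj gK); move: e; rewrite /s.
  case: (g m) => a pa; case: (g n) => b pb /= e; subst b; congr exist; apply: proof_irrelevance.
have Hle : forall m n, (m <= n)%N -> le (s m) (s n).
  by move=> m n mn; apply/(Hf (g m) (g n)); rewrite /omega_le !gK.
case: (classic (exists n, projT1 (s n) <> projT1 (s 0))) => [[n hn]|hall].
- have lt : (projT1 (s 0) < projT1 (s n))%R.
    rewrite lt_neqAle (le_fst (Hle 0 n _)) // andbT; apply/eqP => e; apply hn; by rewrite e.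
  apply: (NB_lt fin lt) => -[t [ti Ht]].
  have Pt : forall k, P (t k).
    move=> k; case: (Ht k) => h1 h2; apply: (HP (s 0) (s n)) => //; exact: proj2_sig.
  pose u k := f (@exist _ P (t k) (Pt k)).
  apply: (pigeon (l := List.seq 0 n.+1) (h := u)).
  + move=> a b e; have := can_inj fK e; move=> /(f_equal (@proj1_sig _ _)) /=; apply ti.
  + move=> k; apply/List.in_seq.
    have := proj1 (Hf (@exist _ P (t k) (Pt k)) (g n)); rewrite gK /restr /=.
    move/(_ (proj2 (Ht k))); rewrite /omega_le /u; lia.
- apply: (block_inj fin (x:= projT1 (s 0)) si) => n.
  by apply: NNPP => h; apply: hall; exists n.
Qed.
End QS2.

Notation mk L c x a := (existT (fun z : rat => lcar (L (c z))) x a).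

Lemma blk_map I1 I2 (L1 : I1 -> LinOrder) (L2 : I2 -> LinOrder) c1 c2
  (fin1 : forall i, finite_LO (L1 i)) (fin2 : forall i, finite_LO (L2 i))
  (F : qsum_car L1 c1 -> qsum_car L2 c2) G : cancel F G -> cancel G F ->
  (forall p q, qsum_le p q <-> qsum_le (F p) (F q)) ->
  forall p q, projT1 p = projT1 q -> projT1 (F p) = projT1 (F q).
Proof.
move=> FK GK HF p q e.
have key : forall p q, projT1 p = projT1 q -> NB (F p) (F q).
  move=> p' q' e' [s [si Hs]]; apply: (NB_same fin1 e').
  exists (G \o s); split; first by move=> a b /= /(can_inj GK); apply si.
  by move=> n /=; split; apply/HF; rewrite GK; case: (Hs n).
by apply: (NB_eq fin2); apply: key.
Qed.

Lemma iso_types I1 I2 (L1 : I1 -> LinOrder) (L2 : I2 -> LinOrder) c1 c2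
  (fin1 : forall i, finite_LO (L1 i)) (fin2 : forall j, finite_LO (L2 j))
  (dc1 : dense_coloring c1) :
  iso_rel (@qsum_le _ L1 c1) (@qsum_le _ L2 c2) -> forall i, exists j, iso_LO (L1 i) (L2 j).
Proof.
move=> [F [G [FK [GK HF]]]] i.
have HG : forall p q, qsum_le p q <-> qsum_le (G p) (G q).
  by move=> p q; rewrite HF !GK.
case: (dc1 0%R 1%R i ltr01) => x [_ [_ cx]]; subst i.
case: (fin1 (c1 x)) => [_ [a0]].
set y := projT1 (F (mk L1 c1 x a0)).
have ey : forall a, projT1 (F (mk L1 c1 x a)) = y.
  by move=> a; apply: (blk_map fin1 fin2 FK GK HF).
have ex : forall b, projT1 (G (mk L2 c2 y b)) = x.
  move=> b; transitivity (projT1 (G (F (mk L1 c1 x a0)))); last by rewrite FK.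
  by apply: (blk_map fin2 fin1 GK FK HG).
exists (c2 y), (fun a => cast (ey a)), (fun b => cast (ex b)).
split; [|split].
- move=> a; apply: cast_eq; by rewrite castK FK.
- move=> b; apply: cast_eq; by rewrite castK GK.
- move=> a b.
  transitivity (qsum_le (mk L1 c1 x a) (mk L1 c1 x b)); first by rewrite qle_same.
  symmetry; transitivity (qsum_le (mk L2 c2 y (cast (ey a))) (mk L2 c2 y (cast (ey b)))).
    by rewrite qle_same.
  by rewrite !castK -HF.
Qed.

Open Scope ring_scope.

Lemma lowb (d : rat) (s : seq rat) : exists b, b <= d /\ (forall r, r \in s -> b <= r) /\ (b = d \/ b \in s).
Proof.
elim: s => [|r s [b [bd [bs bm]]]]; first by exists d; split => //; split => //; left.
case: (lerP r b) => rb.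
- exists r; split; first exact: le_trans rb bd.
  split; last by right; rewrite inE eqxx.
  move=> r'; rewrite inE => /orP [/eqP -> //| /bs]; exact: le_trans.
- exists b; split => //; split.
  + move=> r'; rewrite inE => /orP [/eqP -> | /bs //]; exact: ltW.
  + by case: bm => [->|h]; [left|right; rewrite inE h orbT].
Qed.

Lemma upb (d : rat) (s : seq rat) : exists b, d <= b /\ (forall r, r \in s -> r <= b) /\ (b = d \/ b \in s).
Proof.
elim: s => [|r s [b [bd [bs bm]]]]; first by exists d; split => //; split => //; left.
case: (lerP b r) => rb.
- exists r; split; first exact: le_trans bd rb.
  split; last by right; rewrite inE eqxx.
  move=> r'; rewrite inE => /orP [/eqP -> //| /bs h]; exact: le_trans h rb.
- exists b; split => //; split.
  + move=> r'; rewrite inE => /orP [/eqP -> | /bs //]; exact: ltW.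
  + by case: bm => [->|h]; [left|right; rewrite inE h orbT].
Qed.

Lemma sep (Ls Rs : seq rat) : (forall l r, l \in Ls -> r \in Rs -> l < r) ->
  exists a b, a < b /\ (forall l, l \in Ls -> l <= a) /\ (forall r, r \in Rs -> b <= r).
Proof.
case: Ls => [|l0 Ls] H.
- case: (lowb 0 Rs) => b [_ [bs _]]; exists (b - 1), b; split; first lra.
  by split.
- case: (upb l0 Ls) => a [la [aL am]].
  have aIn : a \in l0 :: Ls by case: am => [->|h]; rewrite inE ?eqxx ?h ?orbT.
  case: (lowb (a + 1) Rs) => b [ba [bs bm]].
  exists a, b; split.
  + case: bm => [->|h]; first lra. exact: H.
  + split => // l; rewrite inE => /orP [/eqP -> // | /aL //].
Qed.

Section BF.
Variable E : rat -> rat -> Prop.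
Definition valid (p : seq (rat * rat)) :=
  (forall u v u' v', (u,v) \in p -> (u',v') \in p -> ((u < u') <-> (v < v'))) /\
  (forall u v, (u,v) \in p -> E u v).

Hypothesis dens : forall x a b, a < b -> exists y, a < y /\ y < b /\ E x y.

Lemma ext p x : valid p -> x \notin map fst p -> exists y, valid ((x,y)::p).
Proof.
move=> [Vo VE] nx.
pose Ls := map snd (filter (fun uv => uv.1 < x) p).
pose Rs := map snd (filter (fun uv => x < uv.1) p).
have sepH : forall l r, l \in Ls -> r \in Rs -> l < r.
  move=> l r /mapP [[u v] + ->] /mapP [[u' v'] + ->]; rewrite !mem_filter /=.
  move=> /andP [ux uvp] /andP [xu uvp'].
  by apply/(Vo _ _ _ _ uvp uvp'); apply: lt_trans xu.
case: (sep sepH) => a [b [ab [Ha Hb]]].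
case: (dens x ab) => y [ay [yb Exy]].
have key : forall u v, (u,v) \in p -> ((x < u) <-> (y < v)) /\ ((u < x) <-> (v < y)).
  move=> u v uvp.
  have ux : u != x.
    apply: contraNneq nx => <-; apply/mapP; by exists (u,v).
  have vL : u < x -> v <= a.
    move=> h; apply: Ha; apply/mapP; exists (u,v) => //; by rewrite mem_filter /= h.
  have vR : x < u -> b <= v.
    move=> h; apply: Hb; apply/mapP; exists (u,v) => //; by rewrite mem_filter /= h.
  split; split => h.
  - have := vR h; lra.
  - case: (ltgtP x u) => // [hux|e]; last by rewrite e eqxx in ux.
    have := vL hux; lra.
  - have := vL h; lra.
  - case: (ltgtP x u) => // [hux|e]; last by rewrite e eqxx in ux.
    have := vR hux; lra.
exists y; split.
- move=> u v u' v'; rewrite !inE => /orP [/eqP [-> ->] | h1] /orP [/eqP [-> ->] | h2].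
  + by rewrite !ltxx.
  + exact: (proj1 (key _ _ h2)).
  + exact: (proj2 (key _ _ h1)).
  + exact: Vo.
- move=> u v; rewrite inE => /orP [/eqP [-> ->] // | ]; apply VE.
Qed.

Definition pickY p x := epsilon (inhabits 0) (fun y => valid ((x,y)::p)).
Definition stepF p x := if x \in map fst p then p else (x, pickY p x) :: p.

Lemma stepF_valid p x : valid p -> valid (stepF p x).
Proof.
rewrite /stepF; case: ifPn => // nx V; rewrite /pickY.
apply: (epsilon_spec (inhabits 0) (fun y => valid ((x,y)::p))); exact: ext.
Qed.

Lemma stepF_sub p x : {subset p <= stepF p x}.
Proof. rewrite /stepF; case: ifP => _ z h //; by rewrite in_cons h orbT. Qed.

Lemma stepF_dom p x : x \in map fst (stepF p x).
Proof. rewrite /stepF; case: ifP => //; by rewrite /= inE eqxx. Qed.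
End BF.

Definition sw (uv : rat * rat) := (uv.2, uv.1).
Lemma swK : involutive sw. Proof. by case. Qed.
Lemma mem_sw u v p : ((u,v) \in map sw p) = ((v,u) \in p).
Proof. rewrite -[(u,v)]/(sw (v,u)) mem_map //; exact: inv_inj swK. Qed.

Lemma valid_sw (E0 : rat -> rat -> Prop) p : valid E0 p -> valid (fun a b => E0 b a) (map sw p).
Proof.
move=> [Vo VE]; split.
- move=> u v u' v'; rewrite !mem_sw => h1 h2; symmetry; exact: Vo h1 h2.
- move=> u v; rewrite mem_sw; apply: VE.
Qed.

Section BF2.
Variable E : rat -> rat -> Prop.
Hypothesis densF : forall x a b, a < b -> exists y, a < y /\ y < b /\ E x y.
Hypothesis densB : forall y a b, a < b -> exists x, a < x /\ x < b /\ E x y.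
Let E' := fun a b => E b a.
Definition stepB p y := map sw (stepF E' (map sw p) y).

Lemma stepB_valid p y : valid E p -> valid E (stepB p y).
Proof.
move=> V; apply: (valid_sw (E0:=E')); apply: stepF_valid; [exact: densB | exact: valid_sw].
Qed.

Lemma stepB_sub p y : {subset p <= stepB p y}.
Proof. move=> [u v] h; rewrite /stepB mem_sw; apply: stepF_sub; by rewrite mem_sw. Qed.

Lemma stepB_cod p y : y \in map snd (stepB p y).
Proof.
rewrite /stepB -map_comp (@eq_map _ _ _ fst); first exact: stepF_dom.
by case.
Qed.

Definition en n : rat := odflt 0 (unpickle n).
Lemma enK x : en (pickle x) = x.
Proof. by rewrite /en pickleK. Qed.

Fixpoint Pn n := if n is m.+1 then stepB (stepF E (Pn m) (en m)) (en m) else [::].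

Lemma Pn_valid n : valid E (Pn n).
Proof.
elim: n => [|n IH] /=; first by split.
apply: stepB_valid; exact: stepF_valid.
Qed.

Lemma Pn_mono m n : (m <= n)%N -> {subset Pn m <= Pn n}.
Proof.
elim: n m => [|n IH] m; first by rewrite leqn0 => /eqP ->.
rewrite leq_eqVlt => /orP [/eqP -> // | ltn] z hz /=.
apply/stepB_sub/stepF_sub; exact: (IH m ltn).
Qed.

Definition inP uv := exists n, uv \in Pn n.

Lemma inP_rel u v u' v' : inP (u,v) -> inP (u',v') -> ((u < u') <-> (v < v')) /\ E u v.
Proof.
move=> [m hm] [n hn]; have [Vo VE] := Pn_valid (maxn m n).
have h1 := Pn_mono (leq_maxl m n) hm; have h2 := Pn_mono (leq_maxr m n) hn.
split; [exact: Vo | exact: VE].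
Qed.

Lemma inP_fun u v v' : inP (u,v) -> inP (u,v') -> v = v'.
Proof.
move=> h1 h2; have [[_ a] _] := inP_rel h1 h2; have [[_ b] _] := inP_rel h2 h1.
rewrite ltxx in a b.
apply: le_anti; rewrite !leNgt; apply/andP; split; apply/negP => h.
- by have := b h.
- by have := a h.
Qed.

Lemma inP_inj u u' v : inP (u,v) -> inP (u',v) -> u = u'.
Proof.
move=> h1 h2; have [[a _] _] := inP_rel h1 h2; have [[b _] _] := inP_rel h2 h1.
rewrite ltxx in a b.
apply: le_anti; rewrite !leNgt; apply/andP; split; apply/negP => h.
- by have := b h.
- by have := a h.
Qed.

Lemma dom_ex x : exists v, inP (x,v).
Proof.
have := stepF_dom E (Pn (pickle x)) x; move/mapP => [[u v] hu /= ->].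
exists v, (pickle x).+1; rewrite /= enK; exact: stepB_sub.
Qed.

Lemma cod_ex y : exists u, inP (u,y).
Proof.
have := stepB_cod (stepF E (Pn (pickle y)) y) y; move/mapP => [[u v] hu /= ->].
by exists u, (pickle y).+1; rewrite /= enK.
Qed.

Lemma backforth : exists h hinv : rat -> rat, cancel h hinv /\ cancel hinv h /\
  (forall x y, (x < y) <-> (h x < h y)) /\ forall x, E x (h x).
Proof.
pose h x := epsilon (inhabits 0) (fun v => inP (x,v)).
pose hi y := epsilon (inhabits 0) (fun u => inP (u,y)).
have hP x : inP (x, h x) by apply: (epsilon_spec (inhabits 0) (fun v => inP (x,v))); exact: dom_ex.
have hiP y : inP (hi y, y) by apply: (epsilon_spec (inhabits 0) (fun u => inP (u,y))); exact: cod_ex.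
exists h, hi; split; [|split; [|split]].
- move=> x; apply: inP_inj (hiP (h x)) (hP x).
- move=> y; apply: inP_fun (hP (hi y)) (hiP y).
- move=> x y; exact: (proj1 (inP_rel (hP x) (hP y))).
- move=> x; exact: (proj2 (inP_rel (hP x) (hP x))).
Qed.
End BF2.

Close Scope ring_scope.

Lemma iso_of_bij (A B : Type) (RA : A -> A -> Prop) (RB : B -> B -> Prop) (F : A -> B) :
  inhabited A -> injective F -> (forall b, exists a, F a = b) ->
  (forall x y, RA x y <-> RB (F x) (F y)) -> iso_rel RA RB.
Proof.
move=> inh Fi Fs HF.
pose G b := epsilon inh (fun a => F a = b).
have GP b : F (G b) = b by apply: (epsilon_spec inh (fun a => F a = b)).
exists F, G; split; [|split] => //.
by move=> a; apply: Fi; rewrite GP.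
Qed.

Lemma iso_sym (A B : Type) (RA : A -> A -> Prop) (RB : B -> B -> Prop) :
  iso_rel RA RB -> iso_rel RB RA.
Proof.
move=> [f [g [fK [gK H]]]]; exists g, f; split; [|split] => //.
by move=> x y; rewrite H !gK.
Qed.

Lemma types_iso I1 I2 (L1 : I1 -> LinOrder) (L2 : I2 -> LinOrder) c1 c2
  (fin1 : forall i, finite_LO (L1 i)) (fin2 : forall j, finite_LO (L2 j))
  (dc1 : dense_coloring c1) (dc2 : dense_coloring c2) :
  same_types L1 L2 -> iso_rel (@qsum_le _ L1 c1) (@qsum_le _ L2 c2).
Proof.
move=> [S1 S2].
pose E x y := iso_LO (L1 (c1 x)) (L2 (c2 y)).
have dF : forall x a b, (a < b)%R -> exists y, (a < y)%R /\ (y < b)%R /\ E x y.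
  move=> x a b ab; case: (S1 (c1 x)) => j hj; case: (dc2 a b j ab) => y [ay [yb cy]].
  by exists y; rewrite /E cy.
have dB : forall y a b, (a < b)%R -> exists x, (a < x)%R /\ (x < b)%R /\ E x y.
  move=> y a b ab; case: (S2 (c2 y)) => i hi; case: (dc1 a b i ab) => x [ax [xb cx]].
  by exists x; rewrite /E cx.
case: (backforth dF dB) => h [hi [hK [hiK [hmono hE]]]].
pose phi x : L1 (c1 x) -> L2 (c2 (h x)) := proj1_sig (constructive_indefinite_description _ (hE x)).
have phiP x : exists g, cancel (phi x) g /\ cancel g (phi x) /\
    forall a b, lo a b <-> lo (phi x a) (phi x b).
  exact: (proj2_sig (constructive_indefinite_description _ (hE x))).
pose F (p : qsum_car L1 c1) : qsum_car L2 c2 := mk L2 c2 (h (projT1 p)) (phi _ (projT2 p)).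
apply: (@iso_of_bij _ _ _ _ F).
- case: (fin1 (c1 0%R)) => _ [a]; constructor; exact: (mk L1 c1 0%R a).
- case=> x a [y b] /= e.
  have e1 := f_equal (@projT1 _ _) e; move: e1 => /= /(can_inj hK) e1; subst y.
  have := Eqdep_dec.inj_pair2_eq_dec _ (fun u v : rat => decP (u =P v)) _ _ _ _ e.
  case: (phiP x) => g [gK _] /(can_inj gK) /= ->; done.
- case=> y b; move: b; rewrite -(hiK y) => b.
  case: (phiP (hi y)) => g [_ [gK _]].
  by exists (mk L1 c1 (hi y) (g b)); rewrite /F /= gK.
- case=> x a [y b]; rewrite /F /=.
  case: (x =P y) => [e|ne].
  + subst y; rewrite !qle_same; case: (phiP x) => g [_ [_ H]]; exact: H.
  + have ne' : h x <> h y by move/(can_inj hK).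
    by rewrite !qle_diff.
Qed.

Theorem lemma11 (I1 I2 : countType) (L1 : I1 -> LinOrder) (L2 : I2 -> LinOrder)
  (fin1 : forall i, finite_LO (L1 i)) (fin2 : forall j, finite_LO (L2 j))
  (c1 : rat -> I1) (c2 : rat -> I2)
  (dc1 : dense_coloring c1) (dc2 : dense_coloring c2) :
  (same_types L1 L2 <-> iso_rel (@qsum_le _ L1 c1) (@qsum_le _ L2 c2)) /\
  (forall P : qsum_car L1 c1 -> Prop,
     is_interval (@qsum_le _ L1 c1) P ->
     ~ iso_rel (@restr _ (@qsum_le _ L1 c1) P) omega_le).
Proof.
split; last by move=> P HP; exact: (no_omega fin1 HP).
split; first exact: types_iso.
move=> H; split; first exact: (iso_types fin1 fin2 dc1 H).
move=> j; have [i hi] := iso_types fin2 fin1 dc2 (iso_sym H) j.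
by exists i; apply: iso_sym.
Qed.
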